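(* Let $\mathcal{G}$ be a Grothendieck category, $X\in\mathcal{G}$, $\sigma$ an ordinal, $(X_\alpha\mid\alpha\le\sigma)$ a chain of subobjects of $X$ with $X_0=0$, $X_\sigma=X$, $X_\mu=\bigcup_{\alpha<\mu}X_\alpha$ for limit $\mu\le\sigma$, and let $(A_\alpha\mid\alpha<\sigma)$ be subobjects of $X$ with $X_{\alpha+1}=X_\alpha+A_\alpha$ for all $\alpha<\sigma$. If $(S_i\mid i\in I)$ is a family of closed subsets of $\sigma$, then $\ell\big(\bigcap_{i\in I}S_i\big)=\bigcap_{i\in I}\ell(S_i)$.
   Context: For $S\subseteq\sigma$ (with $\sigma$ identified with the set of ordinals $<\sigma$), $\ell(S)=\sum_{\alpha\in S}A_\alpha\in\mathrm{Subobj}(X)$. A subset $S\subseteq\sigma$ is called closed if every $\alpha\in S$ satisfies $X_\alpha\cap A_\alpha\subseteq\sum_{\gamma\in S,\,\gamma<\alpha}A_\gamma$. Sums, intersections and direct unions are taken in the lattice $\mathrm{Subobj}(X)$ of subobjects of $X$. *)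

(* Defs.v *)
(* No category-theory library is available, so the category
   G is represented through the only structure the statement uses: the
   lattice Subobj(X) of subobjects of X.  For X in a Grothendieck category
   this is a complete, modular, upper-continuous (AB5) lattice; we state the
   lemma for every such lattice. *)
Set Implicit Arguments.

Definition complete_lattice {L : Type} (le : L -> L -> Prop)
    (sup : (L -> Prop) -> L) : Prop :=
  (forall x, le x x) /\
  (forall x y z, le x y -> le y z -> le x z) /\
  (forall x y, le x y -> le y x -> x = y) /\
  (forall (P : L -> Prop) x, P x -> le x (sup P)) /\
  (forall (P : L -> Prop) u, (forall x, P x -> le x u) -> le (sup P) u).

Definition lbot {L : Type} (sup : (L -> Prop) -> L) : L := sup (fun _ => False).
Definition ltop {L : Type} (sup : (L -> Prop) -> L) : L := sup (fun _ => True).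
Definition ljoin {L : Type} (sup : (L -> Prop) -> L) (a b : L) : L :=
  sup (fun x => x = a \/ x = b).
Definition linf {L : Type} (le : L -> L -> Prop) (sup : (L -> Prop) -> L)
    (P : L -> Prop) : L :=
  sup (fun x => forall y, P y -> le x y).
Definition lmeet {L : Type} (le : L -> L -> Prop) (sup : (L -> Prop) -> L)
    (a b : L) : L :=
  linf le sup (fun x => x = a \/ x = b).

Definition modular_lattice {L : Type} (le : L -> L -> Prop)
    (sup : (L -> Prop) -> L) : Prop :=
  forall a b c, le a c ->
    ljoin sup a (lmeet le sup b c) = lmeet le sup (ljoin sup a b) c.

(* upper continuity (Grothendieck's AB5 condition on subobjects):
   meets distribute over directed joins *)
Definition directed {L : Type} (le : L -> L -> Prop) (D : L -> Prop) : Prop :=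
  (exists d, D d) /\
  (forall x y, D x -> D y -> exists z, D z /\ le x z /\ le y z).

Definition upper_continuous {L : Type} (le : L -> L -> Prop)
    (sup : (L -> Prop) -> L) : Prop :=
  forall (a : L) (D : L -> Prop), directed le D ->
    lmeet le sup a (sup D) = sup (fun x => exists d, D d /\ x = lmeet le sup a d).

Definition subobject_lattice_like {L : Type} (le : L -> L -> Prop)
    (sup : (L -> Prop) -> L) : Prop :=
  complete_lattice le sup /\ modular_lattice le sup /\ upper_continuous le sup.

(* ---------- ordinals: sigma is represented by a well-ordered type T
   (the set of ordinals < sigma); ordinals <= sigma are option T, with
   None standing for sigma itself ---------- *)
Definition well_order {T : Type} (lt : T -> T -> Prop) : Prop :=
  (forall x, ~ lt x x) /\
  (forall x y z, lt x y -> lt y z -> lt x z) /\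
  (forall x y, x = y \/ lt x y \/ lt y x) /\
  well_founded lt.

Definition olt {T : Type} (lt : T -> T -> Prop) (a b : option T) : Prop :=
  match a, b with
  | Some x, Some y => lt x y
  | Some _, None => True
  | None, _ => False
  end.

Definition ole {T : Type} (lt : T -> T -> Prop) (a b : option T) : Prop :=
  a = b \/ olt lt a b.

Definition is_zero {T : Type} (lt : T -> T -> Prop) (b : option T) : Prop :=
  forall g, ~ olt lt g b.

Definition is_limit {T : Type} (lt : T -> T -> Prop) (mu : option T) : Prop :=
  (exists a, olt lt a mu) /\
  (forall a, olt lt a mu -> exists b, olt lt a b /\ olt lt b mu).

Definition is_succ {T : Type} (lt : T -> T -> Prop) (a : T) (b : option T) : Prop :=
  olt lt (Some a) b /\ (forall g, ~ (olt lt (Some a) g /\ olt lt g b)).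

Definition filtration_data {L T : Type} (le : L -> L -> Prop)
    (sup : (L -> Prop) -> L) (lt : T -> T -> Prop)
    (X : option T -> L) (A : T -> L) : Prop :=
  (forall a b, ole lt a b -> le (X a) (X b)) /\
  (forall b, is_zero lt b -> X b = lbot sup) /\
  X None = ltop sup /\
  (forall mu, is_limit lt mu ->
     X mu = sup (fun x => exists a, olt lt a mu /\ x = X a)) /\
  (forall a b, is_succ lt a b -> X b = ljoin sup (X (Some a)) (A a)).

Definition ell {L T : Type} (sup : (L -> Prop) -> L) (A : T -> L)
    (S : T -> Prop) : L :=
  sup (fun x => exists a, S a /\ x = A a).

Definition closed_subset {L T : Type} (le : L -> L -> Prop)
    (sup : (L -> Prop) -> L) (lt : T -> T -> Prop)
    (X : option T -> L) (A : T -> L) (S : T -> Prop) : Prop :=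
  forall a, S a ->
    le (lmeet le sup (X (Some a)) (A a))
       (ell sup A (fun g => S g /\ lt g a)).

(* Main.v *)
Require Import Defs.
From Stdlib Require Import Classical.


Lemma sup_mono {L : Type} {le : L -> L -> Prop} {sup : (L -> Prop) -> L} (Hc : complete_lattice le sup)
  (P Q : L -> Prop) : (forall x, P x -> exists y, Q y /\ le x y) -> le (sup P) (sup Q).
Proof.
  destruct Hc as [Hr [Ht [Ha [Hub Hlub]]]]. intros H. apply Hlub. intros x Px.
  destruct (H x Px) as [y [Qy lxy]]. eapply Ht; [exact lxy | apply Hub; exact Qy].
Qed.

Lemma meet_l {L : Type} {le : L -> L -> Prop} {sup : (L -> Prop) -> L} (Hc : complete_lattice le sup) a b :
  le (lmeet le sup a b) a.
Proof.
  destruct Hc as [Hr [Ht [Ha [Hub Hlub]]]]. unfold lmeet, linf. apply Hlub.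
  intros x Hx. apply Hx. left; reflexivity.
Qed.

Lemma meet_r {L : Type} {le : L -> L -> Prop} {sup : (L -> Prop) -> L} (Hc : complete_lattice le sup) a b :
  le (lmeet le sup a b) b.
Proof.
  destruct Hc as [Hr [Ht [Ha [Hub Hlub]]]]. unfold lmeet, linf. apply Hlub.
  intros x Hx. apply Hx. right; reflexivity.
Qed.

Lemma meet_glb {L : Type} {le : L -> L -> Prop} {sup : (L -> Prop) -> L} (Hc : complete_lattice le sup) a b u :
  le u a -> le u b -> le u (lmeet le sup a b).
Proof.
  destruct Hc as [Hr [Ht [Ha [Hub Hlub]]]]. intros H1 H2. unfold lmeet, linf. apply Hub.
  intros y [-> | ->]; assumption.
Qed.

Lemma linf_lb {L : Type} {le : L -> L -> Prop} {sup : (L -> Prop) -> L} (Hc : complete_lattice le sup) P y :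
  P y -> le (linf le sup P) y.
Proof.
  destruct Hc as [Hr [Ht [Ha [Hub Hlub]]]]. intros Py. unfold linf. apply Hlub.
  intros x Hx. apply Hx. exact Py.
Qed.

Lemma linf_glb {L : Type} {le : L -> L -> Prop} {sup : (L -> Prop) -> L} (Hc : complete_lattice le sup) P u :
  (forall y, P y -> le u y) -> le u (linf le sup P).
Proof.
  destruct Hc as [Hr [Ht [Ha [Hub Hlub]]]]. intros H. unfold linf. apply Hub. exact H.
Qed.

Lemma join_l {L : Type} {le : L -> L -> Prop} {sup : (L -> Prop) -> L} (Hc : complete_lattice le sup) a b :
  le a (ljoin sup a b).
Proof. destruct Hc as [Hr [Ht [Ha [Hub Hlub]]]]. apply Hub. left; reflexivity. Qed.

Lemma join_r {L : Type} {le : L -> L -> Prop} {sup : (L -> Prop) -> L} (Hc : complete_lattice le sup) a b :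
  le b (ljoin sup a b).
Proof. destruct Hc as [Hr [Ht [Ha [Hub Hlub]]]]. apply Hub. right; reflexivity. Qed.

Lemma join_lub {L : Type} {le : L -> L -> Prop} {sup : (L -> Prop) -> L} (Hc : complete_lattice le sup) a b u :
  le a u -> le b u -> le (ljoin sup a b) u.
Proof.
  destruct Hc as [Hr [Ht [Ha [Hub Hlub]]]]. intros H1 H2. apply Hlub.
  intros x [-> | ->]; assumption.
Qed.

Lemma meet_comm {L : Type} {le : L -> L -> Prop} {sup : (L -> Prop) -> L} (Hc : complete_lattice le sup) a b :
  lmeet le sup a b = lmeet le sup b a.
Proof.
  pose proof Hc as [Hr [Ht [Ha [Hub Hlub]]]]. apply Ha; apply (meet_glb Hc);
  (apply (meet_l Hc) || apply (meet_r Hc)).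
Qed.

Lemma join_comm {L : Type} {le : L -> L -> Prop} {sup : (L -> Prop) -> L} (Hc : complete_lattice le sup) a b :
  ljoin sup a b = ljoin sup b a.
Proof.
  pose proof Hc as [Hr [Ht [Ha [Hub Hlub]]]]. apply Ha; apply (join_lub Hc);
  (apply (join_l Hc) || apply (join_r Hc)).
Qed.

Lemma meet_mono {L : Type} {le : L -> L -> Prop} {sup : (L -> Prop) -> L} (Hc : complete_lattice le sup) a b a' b' :
  le a a' -> le b b' -> le (lmeet le sup a b) (lmeet le sup a' b').
Proof.
  pose proof Hc as [Hr [Ht [Ha [Hub Hlub]]]]. intros H1 H2. apply (meet_glb Hc).
  - eapply Ht; [apply (meet_l Hc) | exact H1].
  - eapply Ht; [apply (meet_r Hc) | exact H2].
Qed.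

Lemma wf_min {U : Type} (R : U -> U -> Prop) (wf : well_founded R) (P : U -> Prop) x :
  P x -> exists m, P m /\ forall y, R y m -> ~ P y.
Proof.
  intros Px. apply NNPP. intros Hn.
  assert (forall z, ~ P z).
  { intros z. induction z as [z IH] using (well_founded_ind wf).
    intros Pz. apply Hn. exists z. split; auto. }
  exact (H x Px).
Qed.

Definition ellb {L T : Type} (sup : (L -> Prop) -> L) (lt : T -> T -> Prop)
  (A : T -> L) (P : T -> Prop) (b : option T) : L :=
  ell sup A (fun g => P g /\ olt lt (Some g) b).

Theorem lemma2p4 (L : Type) (le : L -> L -> Prop) (sup : (L -> Prop) -> L)
    (HL : subobject_lattice_like le sup)
    (T : Type) (lt : T -> T -> Prop) (Hwo : well_order lt)
    (X : option T -> L) (A : T -> L) (HXA : filtration_data le sup lt X A)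
    (I : Type) (S : I -> T -> Prop)
    (Hcl : forall i, closed_subset le sup lt X A (S i)) :
  ell sup A (fun a => forall i, S i a)
  = linf le sup (fun x => exists i, x = ell sup A (S i)).
Proof.
  destruct HL as [Hc [Hmod Huc]].
  pose proof Hc as [Hr [Ht [Ha [Hub Hlub]]]].
  destruct Hwo as [Hirr [Hltt [Htri Hwf]]].
  destruct HXA as [Hmono [Hzero [Htop [Hlim Hsucc]]]].
  assert (otri : forall a b : option T, a = b \/ olt lt a b \/ olt lt b a).
  { intros [x|] [y|]; simpl; auto.
    destruct (Htri x y) as [->|[H|H]]; auto. }
  assert (otrans : forall a b c : option T, olt lt a b -> olt lt b c -> olt lt a c).
  { intros [x|] [y|] [z|]; simpl; eauto; tauto. }
  assert (owf : well_founded (olt lt)).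
  { assert (HS : forall x, Acc (olt lt) (Some x)).
    { intros x. induction x as [x IH] using (well_founded_ind Hwf).
      constructor. intros [y|] Hy; simpl in Hy; [apply IH; exact Hy | destruct Hy]. }
    intros [x|]; [apply HS|]. constructor. intros [y|] Hy; [apply HS | destruct Hy]. }
  assert (classif : forall b, is_zero lt b \/ (exists c, is_succ lt c b) \/ is_limit lt b).
  { intros b. destruct (classic (exists g, olt lt g b)) as [[g Hg]|Hn].
    2: { left. intros g Hg. apply Hn. eauto. }
    right. destruct (classic (exists c, is_succ lt c b)) as [Hs|Hns]; [left; auto|right].
    split; [eauto|]. intros a Hab. destruct a as [c|]; [|destruct Hab].
    apply NNPP; intro Hno. apply Hns. exists c. split; auto.
    intros g' [H1 H2]. apply Hno. eauto. }
  assert (succ_pred : forall c b g, is_succ lt c b -> olt lt (Some g) b -> g = c \/ lt g c).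
  { intros c b g [Hcb Hno] Hg. destruct (Htri g c) as [->|[H|H]]; auto.
    exfalso. apply (Hno (Some g)). split; [exact H | exact Hg]. }
  assert (succ_ex : forall g b, olt lt (Some g) b -> exists c, is_succ lt g c /\ ole lt c b).
  { intros g b Hgb. destruct (wf_min (olt lt) owf (fun c => olt lt (Some g) c) b Hgb) as [m [Pm Hmin]].
    exists m. split.
    - split; [exact Pm|]. intros h [H1 H2]. exact (Hmin h H2 H1).
    - destruct (otri m b) as [->|[H|H]]; [left; reflexivity | right; exact H |].
      exfalso. exact (Hmin b H Hgb). }
  assert (F1 : forall g b, olt lt (Some g) b -> le (A g) (X b)).
  { intros g b Hgb. destruct (succ_ex g b Hgb) as [c [Hs Hcb]].
    eapply Ht; [| apply Hmono; exact Hcb]. rewrite (Hsucc g c Hs). apply (join_r Hc). }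
  assert (ellb_mono : forall P b b', ole lt b b' -> le (ellb sup lt A P b) (ellb sup lt A P b')).
  { intros P b b' Hbb. apply (sup_mono Hc). intros x [a [[Pa Hab] ->]].
    exists (A a). split; [|apply Hr]. exists a. split; [split; [exact Pa|]|reflexivity].
    destruct Hbb as [<-|Hbb]; [exact Hab | eapply otrans; eauto]. }
  assert (ellb_X : forall P b, le (ellb sup lt A P b) (X b)).
  { intros P b. apply Hlub. intros x [a [[_ Hab] ->]]. apply F1. exact Hab. }
  assert (A_ellb : forall (P : T -> Prop) g b, P g -> olt lt (Some g) b -> le (A g) (ellb sup lt A P b)).
  { intros P g b Pg Hgb. apply Hub. exists g. auto. }
  assert (ole_None : forall b, ole lt b None).
  { intros [b|]; [right; exact Logic.I | left; reflexivity]. }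
  assert (ell_None : forall P, le (ell sup A P) (ellb sup lt A P None)).
  { intros P. apply (sup_mono Hc). intros x [a [Pa ->]]. exists (A a). split; [|apply Hr].
    exists a. split; [split; [exact Pa | exact Logic.I] | reflexivity]. }
  assert (K : forall i a b, ole lt a b ->
     le (lmeet le sup (X a) (ellb sup lt A (S i) b)) (ellb sup lt A (S i) a)).
  { intros i a b. induction b as [b IH] using (well_founded_ind owf). intros Hab.
    destruct Hab as [<-|Hab]; [apply (meet_r Hc)|].
    destruct (classif b) as [Hz|[[c Hs]|Hl]].
    - exfalso. exact (Hz a Hab).
    - assert (Hcb : olt lt (Some c) b) by exact (proj1 Hs).
      assert (Hac : ole lt a (Some c)).
      { destruct (otri a (Some c)) as [->|[H|H]]; [left; reflexivity | right; exact H|].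
        exfalso. apply (proj2 Hs a). split; [exact H | exact Hab]. }
      assert (Hstep : le (lmeet le sup (X (Some c)) (ellb sup lt A (S i) b))
                         (ellb sup lt A (S i) (Some c))).
      { destruct (classic (S i c)) as [Hsc|Hnsc].
        - assert (H1 : le (ellb sup lt A (S i) b)
                          (ljoin sup (ellb sup lt A (S i) (Some c)) (A c))).
          { apply Hlub. intros x [g [[Sg Hgb] ->]].
            destruct (succ_pred c b g Hs Hgb) as [->|Hgc]; [apply (join_r Hc)|].
            eapply Ht; [|apply (join_l Hc)]. apply A_ellb; [exact Sg | exact Hgc]. }
          eapply Ht.
          { apply (meet_glb Hc); [| apply (meet_l Hc)].
            eapply Ht; [apply (meet_r Hc) | exact H1]. }
          rewrite <- Hmod by apply ellb_X.
          apply (join_lub Hc); [apply Hr|].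
          rewrite meet_comm by exact Hc.
          exact (Hcl i c Hsc).
        - eapply Ht; [apply (meet_r Hc)|]. apply (sup_mono Hc).
          intros x [g [[Sg Hgb] ->]]. exists (A g). split; [|apply Hr].
          exists g. split; [split; [exact Sg|] | reflexivity].
          destruct (succ_pred c b g Hs Hgb) as [->|Hgc]; [contradiction | exact Hgc]. }
      eapply Ht; [| exact (IH (Some c) Hcb Hac)].
      apply (meet_glb Hc); [apply (meet_l Hc)|].
      eapply Ht; [| exact Hstep]. apply (meet_mono Hc); [apply Hmono; exact Hac | apply Hr].
    - set (D := fun x => exists c, olt lt c b /\ ole lt a c /\ x = ellb sup lt A (S i) c).
      assert (H1 : le (ellb sup lt A (S i) b) (sup D)).
      { apply Hlub. intros x [g [[Sg Hgb] ->]].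
        destruct (proj2 Hl (Some g) Hgb) as [c [Hgc Hcb]].
        destruct (otri a c) as [->|[H|H]].
        - eapply Ht; [| apply Hub; exists c; split; [exact Hcb | split; [left; reflexivity | reflexivity]]].
          apply A_ellb; assumption.
        - eapply Ht; [| apply Hub; exists c; split; [exact Hcb | split; [right; exact H | reflexivity]]].
          apply A_ellb; assumption.
        - eapply Ht; [| apply Hub; exists a; split; [exact Hab | split; [left; reflexivity | reflexivity]]].
          apply A_ellb; [exact Sg | eapply otrans; eauto]. }
      assert (Hdir : directed le D).
      { split.
        - exists (ellb sup lt A (S i) a). exists a. split; [exact Hab | split; [left; reflexivity | reflexivity]].
        - intros x y [c1 [H1b [H1a ->]]] [c2 [H2b [H2a ->]]].
          destruct (otri c1 c2) as [<-|[H|H]].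
          + exists (ellb sup lt A (S i) c1). split; [exists c1; auto | split; apply Hr].
          + exists (ellb sup lt A (S i) c2). split; [exists c2; auto | split; [apply ellb_mono; right; exact H | apply Hr]].
          + exists (ellb sup lt A (S i) c1). split; [exists c1; auto | split; [apply Hr | apply ellb_mono; right; exact H]]. }
      eapply Ht; [apply (meet_mono Hc); [apply Hr | exact H1]|].
      rewrite (Huc _ D Hdir). apply Hlub. intros x [d [[c [Hcb [Hac ->]]] ->]].
      exact (IH c Hcb Hac). }
  set (m := linf le sup (fun x => exists i, x = ell sup A (S i))).
  set (Sint := fun a => forall i, S i a).
  assert (M : forall b, le (lmeet le sup (X b) m) (ellb sup lt A Sint b)).
  { intros b. induction b as [b IH] using (well_founded_ind owf).
    destruct (classif b) as [Hz|[[c Hs]|Hl]].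
    - rewrite (Hzero b Hz). eapply Ht; [apply (meet_l Hc)|]. apply Hlub. intros _ [].
    - assert (Hcb : olt lt (Some c) b) by exact (proj1 Hs).
      destruct (classic (Sint c)) as [HS|HnS].
      + assert (Hacm : le (A c) m).
        { apply (linf_glb Hc). intros y [i ->]. apply Hub. exists c. split; [apply HS | reflexivity]. }
        rewrite (Hsucc c b Hs). rewrite join_comm by exact Hc.
        rewrite <- (Hmod (A c) (X (Some c)) m Hacm).
        apply (join_lub Hc); [apply A_ellb; assumption|].
        eapply Ht; [exact (IH (Some c) Hcb)|]. apply ellb_mono. right; exact Hcb.
      + apply not_all_ex_not in HnS. destruct HnS as [j Hj].
        eapply Ht; [| eapply Ht; [exact (IH (Some c) Hcb) | apply ellb_mono; right; exact Hcb]].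
        apply (meet_glb Hc); [|apply (meet_r Hc)].
        eapply Ht.
        { apply (meet_mono Hc); [apply Hr|]. eapply Ht; [| apply (ell_None (S j))].
          apply (linf_lb Hc). exists j. reflexivity. }
        eapply Ht; [apply K; apply ole_None|].
        eapply Ht; [| apply (ellb_X (S j))]. apply (sup_mono Hc).
        intros x [g [[Sg Hgb] ->]]. exists (A g). split; [|apply Hr].
        exists g. split; [split; [exact Sg|] | reflexivity].
        destruct (succ_pred c b g Hs Hgb) as [->|Hgc]; [contradiction | exact Hgc].
    - rewrite (Hlim b Hl).
      set (D := fun x => exists a, olt lt a b /\ x = X a).
      assert (Hdir : directed le D).
      { split.
        - destruct (proj1 Hl) as [a Ha0]. exists (X a). exists a. auto.
        - intros x y [c1 [H1 ->]] [c2 [H2 ->]].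
          destruct (otri c1 c2) as [<-|[H|H]].
          + exists (X c1). split; [exists c1; auto | split; apply Hr].
          + exists (X c2). split; [exists c2; auto | split; [apply Hmono; right; exact H | apply Hr]].
          + exists (X c1). split; [exists c1; auto | split; [apply Hr | apply Hmono; right; exact H]]. }
      rewrite meet_comm by exact Hc. rewrite (Huc m D Hdir).
      apply Hlub. intros x [d [[a [Hab ->]] ->]].
      rewrite meet_comm by exact Hc.
      eapply Ht; [exact (IH a Hab)|]. apply ellb_mono. right; exact Hab. }
  apply Ha.
  - apply (linf_glb Hc). intros y [i ->]. apply (sup_mono Hc).
    intros x [a [Sa ->]]. exists (A a). split; [exists a; split; [apply Sa | reflexivity] | apply Hr].
  - fold m. eapply Ht.
    { apply (meet_glb Hc) with (a := X None); [| apply Hr].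
      rewrite Htop. apply Hub. exact Logic.I. }
    eapply Ht; [exact (M None)|]. apply (sup_mono Hc).
    intros x [a [[Sa _] ->]]. exists (A a). split; [exists a; split; [exact Sa | reflexivity] | apply Hr].
Qed.
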